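(* Let $X$ be a geodesic metric space, $e\in X$, and $N\le N'$ Morse gauges. For $x,y\in\partial_s X^{(N)}_e$ (regarded also as points of $\partial_s X^{(N')}_e$ via the inclusion $X^{(N)}_e\subseteq X^{(N')}_e$), \[(x\cdot_N y)_e\le (x\cdot_{N'} y)_e\le (x\cdot_N y)_e+32N'(3,0).\]
   Context: A Morse gauge is a function $N$ assigning to each $(K,C)$ a number $N(K,C)\ge0$; $N\le N'$ means pointwise. A geodesic is $N$-Morse if every $(K,C)$-quasi-geodesic with endpoints on it lies in its $N(K,C)$-neighbourhood. $X^{(N)}_e$ is the set of points joined to $e$ by an $N$-Morse geodesic (restricted metric); it is hyperbolic. Its sequential boundary $\partial_s X^{(N)}_e$ consists of equivalence classes of sequences $(x_n)$ in $X^{(N)}_e$ with $(x_i\cdot x_j)_e\to\infty$, where $(a\cdot b)_e=\frac12(d(e,a)+d(e,b)-d(a,b))$ and $(x_n)\sim(y_m)$ iff $(x_i\cdot y_j)_e\to\infty$. The $N$-Gromov product $(x\cdot_N y)_e$ of $x,y\in\partial_s X^{(N)}_e$ is the supremum of $\liminf_{m,n\to\infty}(x_n\cdot y_m)_e$ over all pairs of sequences $(x_n),(y_m)\subseteq X^{(N)}_e$ representing $x$ and $y$. *)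

(* Defs.v *)
From HB Require Import structures.
From mathcomp Require Import all_boot all_order all_algebra.
From mathcomp Require Import all_classical all_reals ereal.
Set Implicit Arguments. Unset Strict Implicit. Unset Printing Implicit Defensive.
Import Order.TTheory GRing.Theory Num.Theory.
Local Open Scope ring_scope.
Local Open Scope classical_set_scope.

Section MorseDefs.
Variables (R : realType) (X : Type) (d : X -> X -> R).

Definition is_metric : Prop :=
  (forall x y, 0 <= d x y) /\ (forall x y, d x y = 0 <-> x = y) /\
  (forall x y, d x y = d y x) /\ (forall x y z, d x z <= d x y + d y z).

Definition is_geodesic (gamma : R -> X) (L : R) : Prop :=
  0 <= L /\ forall s t, 0 <= s <= L -> 0 <= t <= L -> d (gamma s) (gamma t) = `|s - t|.

Definition geodesic_space : Prop :=
  forall x y, exists gamma : R -> X,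
    is_geodesic gamma (d x y) /\ gamma 0 = x /\ gamma (d x y) = y.

Definition on_geod (gamma : R -> X) (L : R) (p : X) : Prop :=
  exists s, 0 <= s <= L /\ gamma s = p.

Definition quasi_geodesic (K C : R) (q : R -> X) (a b : R) : Prop :=
  a <= b /\ forall s t, a <= s <= b -> a <= t <= b ->
    K^-1 * `|s - t| - C <= d (q s) (q t) /\ d (q s) (q t) <= K * `|s - t| + C.

Definition morse_gauge (N : R -> R -> R) : Prop :=
  forall K C, 1 <= K -> 0 <= C -> 0 <= N K C.

Definition gauge_le (N N' : R -> R -> R) : Prop :=
  forall K C, 1 <= K -> 0 <= C -> N K C <= N' K C.

Definition morse (N : R -> R -> R) (gamma : R -> X) (L : R) : Prop :=
  forall K C, 1 <= K -> 0 <= C ->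
  forall (q : R -> X) (a b : R), quasi_geodesic K C q a b ->
    on_geod gamma L (q a) -> on_geod gamma L (q b) ->
    forall t, a <= t <= b -> exists s, 0 <= s <= L /\ d (q t) (gamma s) <= N K C.

Definition XN (N : R -> R -> R) (e : X) (x : X) : Prop :=
  exists (gamma : R -> X) (L : R), is_geodesic gamma L /\ gamma 0 = e /\ gamma L = x
    /\ morse N gamma L.

Definition gprod (e a b : X) : R := (d e a + d e b - d a b) / 2.

Definition tends_infty2 (f : nat -> nat -> R) : Prop :=
  forall M : R, exists n0 : nat, forall i j : nat, (n0 <= i)%N -> (n0 <= j)%N -> M < f i j.

Definition gromov_seq (N : R -> R -> R) (e : X) (u : nat -> X) : Prop :=
  (forall n, XN N e (u n)) /\ tends_infty2 (fun i j => gprod e (u i) (u j)).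

Definition seq_equiv (e : X) (u v : nat -> X) : Prop :=
  tends_infty2 (fun i j => gprod e (u i) (v j)).

(* the point of the sequential boundary of X^(N)_e represented by u:
   its equivalence class *)
Definition bclass (N : R -> R -> R) (e : X) (u : nat -> X) : set (nat -> X) :=
  [set v | gromov_seq N e v /\ seq_equiv e v u].

Definition liminf2 (f : nat -> nat -> R) : \bar R :=
  ereal_sup (range (fun k : nat =>
    ereal_inf [set z | exists m n : nat, (k <= m)%N /\ (k <= n)%N /\ z = (f m n)%:E])).

Definition gprodN (e : X) (x y : set (nat -> X)) : \bar R :=
  ereal_sup [set l | exists u v : nat -> X, x u /\ y v /\
                      l = liminf2 (fun m n => gprod e (u n) (v m))].

End MorseDefs.

(* Main.v *)
Require Import Defs.
From HB Require Import structures.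
From mathcomp Require Import all_boot all_order all_algebra.
From mathcomp Require Import all_classical all_reals ereal.
From mathcomp Require Import topology normedtype derive.
From mathcomp Require Import ring lra.
Import Order.TTheory GRing.Theory Num.Theory numFieldNormedType.Exports.
Local Open Scope ring_scope.
Set Implicit Arguments.

Lemma absle (R : realType) (s t : R) : s <= t -> `|s - t| = t - s.
Proof. by move=> h; rewrite distrC ger0_norm // subr_ge0. Qed.

Lemma lip_cont (R : realType) (f : R -> R) :
  (forall u v, `|f u - f v| <= `|u - v|) -> continuous f.
Proof.
move=> Hf x; apply/cvgrPdist_lt => eps eps0.
near=> y. apply: (le_lt_trans (Hf x y)). near: y.
exact: (@cvgr_dist_lt _ _ _ (nbhs x) _ id x (@cvg_id _ _) eps eps0).
Unshelve. all: by end_near.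
Qed.

Lemma met_rev (R : realType) (X : Type) (d : X -> X -> R) :
  is_metric d -> forall p a b, `|d p a - d p b| <= d a b.
Proof.
case=> h0 [h1 [hC hT]] p a b; rewrite ler_norml; apply/andP; split.
- have := hT p a b; lra.
- have := hT p b a; rewrite (hC b a); lra.
Qed.

Lemma clampE (R : realType) (L : R) : 0 <= L -> forall w : R, Num.max 0 (Num.min w L) =
   (if w <= 0 then 0 else if w <= L then w else L).
Proof.
move=> L0 w; case: (leP w 0) => hw; case: (leP w L) => hwL.
  - by rewrite max_l.
  - lra.
  - by rewrite max_r // ltW.
  - by rewrite max_r.
Qed.

Lemma clamp_lip (R : realType) (L u v : R) : 0 <= L ->
  `|Num.max 0 (Num.min u L) - Num.max 0 (Num.min v L)| <= `|u - v|.
Proof.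
move=> L0.
rewrite !clampE //.
have H1 : u - v <= `|u - v| := ler_norm _.
have H2 : v - u <= `|u - v| by rewrite distrC; exact: ler_norm.
move: H1 H2; set n := `|u - v| => H1 H2.
rewrite ler_norml.
case: (leP u 0) => hu; case: (leP v 0) => hv; try case: (leP u L) => huL;
  try case: (leP v L) => hvL; rewrite /=; apply/andP; split; lra.
Qed.

Lemma clamp_in (R : realType) (L w : R) : 0 <= L ->
  0 <= Num.max 0 (Num.min w L) <= L.
Proof.
move=> L0; rewrite clampE //; case: (leP w 0) => hw; case: (leP w L) => hwL /=;
  apply/andP; split; lra.
Qed.

Lemma clamp_id (R : realType) (L w : R) : 0 <= w <= L ->
  Num.max 0 (Num.min w L) = w.
Proof.
move=> /andP[h1 h2]; rewrite clampE; last by lra.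
case: (leP w 0) => hw; last by rewrite h2.
lra.
Qed.

Lemma closest (R : realType) (X : Type) (d : X -> X -> R) :
  is_metric d -> forall (s : R -> X) (L : R) (p : X), is_geodesic d s L ->
  exists u0, 0 <= u0 <= L /\ forall u, 0 <= u <= L -> d p (s u0) <= d p (s u).
Proof.
move=> Hm s L p [L0 Hs].
set cl := fun u => Num.max 0 (Num.min u L).
have Hc : continuous (fun u => d p (s (cl u))).
  apply: lip_cont => u v /=; apply: le_trans (met_rev Hm _ _ _) _.
  rewrite Hs; try exact: clamp_in.
  exact: clamp_lip.
have [c cI Hmin] := EVT_min (f := fun u => d p (s (cl u))) L0 (continuous_subspaceT Hc).
move: cI; rewrite in_itv /= => cI.
exists c; split => //.
move=> u uI; have := Hmin u; rewrite in_itv /= uI => /(_ isT).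
by rewrite /cl !clamp_id.
Qed.

Lemma qg_concat (R : realType) (X : Type) (d : X -> X -> R) :
  is_metric d -> forall (p w : X) (g tau : R -> X) (h l : R),
  is_geodesic d g h -> g 0 = p -> g h = w -> is_geodesic d tau l -> tau 0 = w ->
  (forall b, 0 <= b <= l -> h <= d p (tau b)) ->
  quasi_geodesic d 3 0 (fun t => if t <= h then g t else tau (t - h)) 0 (h + l).
Proof.
move=> Hm p w g tau h l [h0 Hg] g0 gh [l0 Ht] t0 Hcl.
have [dge0 [_ [dC dT]]] := Hm.
split; first lra.
have key : forall s t, 0 <= s <= h + l -> 0 <= t <= h + l -> s <= t ->
   3^-1 * `|s - t| - 0 <= d (if s <= h then g s else tau (s - h))
                               (if t <= h then g t else tau (t - h)) /\
   d (if s <= h then g s else tau (s - h)) (if t <= h then g t else tau (t - h))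
     <= 3 * `|s - t| + 0.
  move=> s t /andP[s0 s1] /andP[t0' t1] st.
  rewrite absle //.
  case: (leP t h) => th.
    rewrite (le_trans st th) Hg; last 2 first.
      by apply/andP; split; lra.
      by apply/andP; split; lra.
    rewrite absle //; split; lra.
  case: (leP s h) => sh.
    set b := t - h.
    have bI : 0 <= b <= l by apply/andP; split; rewrite /b; lra.
    have up : d (g s) (tau b) <= (h - s) + b.
      apply: le_trans (dT _ w _) _.
      rewrite -{1}gh -t0 Hg; last 2 first.
        by apply/andP; split; lra.
        by apply/andP; split; lra.
      rewrite Ht; last 2 first.
        by apply/andP; split; lra.
        by [].
      rewrite absle // absle //; lra.
    have low1 := dT p (g s) (tau b).
    have low2 := dT w (g s) (tau b).
    have l1 := Hcl b bI.
    have E1 : d p (g s) = s.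
      rewrite -g0 Hg; last 2 first.
        by apply/andP; split; lra.
        by apply/andP; split; lra.
      by rewrite absle // subr0.
    have E2 : d w (g s) = h - s.
      rewrite -gh Hg; last 2 first.
        by apply/andP; split; lra.
        by apply/andP; split; lra.
      by rewrite distrC absle.
    have E3 : d w (tau b) = b.
      rewrite -t0 Ht; last 2 first.
        by apply/andP; split; lra.
        by [].
      by rewrite absle ?subr0 //; case/andP: bI.
    rewrite /b in up low1 low2 l1 E3 *.
    split; lra.
  rewrite Ht; last 2 first.
    by apply/andP; split; lra.
    by apply/andP; split; lra.
  have -> : s - h - (t - h) = s - t by lra.
  rewrite absle //; split; lra.
move=> s t sI tI.
case: (leP s t) => st; first exact: key.
rewrite distrC dC; apply: key => //; exact: ltW.
Qed.

Lemma geod_dist0 (R : realType) (X : Type) (d : X -> X -> R) (g : R -> X) (L t : R) :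
  is_geodesic d g L -> 0 <= t <= L -> d (g 0) (g t) = t.
Proof.
move=> [L0 Hg] tI; rewrite Hg //; last by apply/andP; split; lra.
by rewrite absle ?subr0 //; case/andP: tI.
Qed.

Lemma geod_near (R : realType) (X : Type) (d : X -> X -> R) :
  is_metric d -> forall (ga : R -> X) (L : R) (p : X) (t s D : R),
  is_geodesic d ga L -> d (ga 0) p = t -> 0 <= t <= L -> 0 <= s <= L ->
  d p (ga s) <= D -> d p (ga t) <= 2 * D.
Proof.
move=> Hm ga L p t s D Hga dt tI sI Hs.
have [dge0 [_ [dC dT]]] := Hm.
have Es := geod_dist0 s Hga sI.
have h1 := dT (ga 0) p (ga s).
have h2 := dT (ga 0) (ga s) p.
rewrite (dC (ga s) p) in h2.
have [_ Hg] := Hga.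
have E := Hg s t sI tI.
apply: le_trans (dT p (ga s) (ga t)) _.
rewrite E.
have : `|s - t| <= D by rewrite ler_norml; apply/andP; split; lra.
lra.
Qed.

Lemma side (R : realType) (X : Type) (d : X -> X -> R) :
  is_metric d -> forall (N : R -> R -> R) (g ga tau : R -> X) (h Lz l : R) (w z : X),
  is_geodesic d g h -> g h = w ->
  is_geodesic d ga Lz -> ga 0 = g 0 -> ga Lz = z -> morse d N ga Lz ->
  is_geodesic d tau l -> tau 0 = w -> tau l = z ->
  (forall b, 0 <= b <= l -> h <= d (g 0) (tau b)) -> h <= Lz ->
  forall t, 0 <= t <= h -> d (g t) (ga t) <= 2 * N 3 0.
Proof.
move=> Hm N g ga tau h Lz l w z Hg gh Hga ga0 gaz Mga Htau tau0 tauz Hcl hLz t tI.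
have qg := qg_concat Hm Hg (erefl (g 0)) gh Htau tau0 Hcl.
have [h0 _] := Hg. have [l0 _] := Htau. have [Lz0 _] := Hga.
set q := (fun t0 : R => if t0 <= h then g t0 else tau (t0 - h)) in qg.
have oa : on_geod ga Lz (q 0).
  exists 0; split; first by apply/andP; split; lra.
  by rewrite /q h0 ga0.
have ob : on_geod ga Lz (q (h + l)).
  exists Lz; split; first by apply/andP; split; lra.
  rewrite /q gaz.
  case: (leP (h + l) h) => hl.
    have -> : h + l = h by lra.
    have l00 : l = 0 by lra.
    rewrite l00 in tauz.
    by rewrite gh -tau0 -tauz.
  have -> : h + l - h = l by lra.
  by rewrite tauz.
have tI' : 0 <= t <= h + l by case/andP: tI => ? ?; apply/andP; split; lra.
have [s [sI Hs]] := Mga 3 0 (ltac:(lra)) (lexx 0) q 0 (h + l) qg oa ob t tI'.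
move: Hs; rewrite /q; case/andP: (tI) => _ -> Hs.
apply: (geod_near Hm (g t) s (N 3 0) Hga _ _ sI Hs).
  by rewrite ga0 (geod_dist0 t Hg).
by case/andP: tI => ? ?; apply/andP; split; lra.
Qed.

Lemma close (R : realType) (X : Type) (d : X -> X -> R) :
  is_metric d -> geodesic_space d -> forall (N : R -> R -> R) (e x y : X)
  (gx gy : R -> X) (Lx Ly : R),
  is_geodesic d gx Lx -> gx 0 = e -> gx Lx = x -> morse d N gx Lx ->
  is_geodesic d gy Ly -> gy 0 = e -> gy Ly = y -> morse d N gy Ly ->
  exists h, gprod d e x y <= h /\ h <= Lx /\ h <= Ly /\
    forall t, 0 <= t <= h -> d (gx t) (gy t) <= 4 * N 3 0.
Proof.
move=> Hm Hgeo N e x y gx gy Lx Ly Hgx gx0 gxL Mx Hgy gy0 gyL My.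
have [dge0 [d0 [dC dT]]] := Hm.
have [s [Hs [s0 sL]]] := Hgeo x y.
have [u0 [u0I Hcl]] := closest Hm e Hs.
have [g [Hg [g0 gh]]] := Hgeo e (s u0).
set h := d e (s u0) in Hg gh *.
have [L0 Hsd] := Hs.
have [Lx0 _] := Hgx. have [Ly0 _] := Hgy.
have Lxe : Lx = d e x.
  by rewrite -gx0 -gxL (geod_dist0 Lx Hgx) //; apply/andP; split; lra.
have Lye : Ly = d e y.
  by rewrite -gy0 -gyL (geod_dist0 Ly Hgy) //; apply/andP; split; lra.
have hx : h <= Lx.
  rewrite Lxe -s0; apply: Hcl; apply/andP; split; lra.
have hy : h <= Ly.
  rewrite Lye -sL; apply: Hcl; apply/andP; split; lra.
exists h; split; [|split => //; split => //].
  have E1 : d x (s u0) = u0 by rewrite -s0 (geod_dist0 u0 Hs).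
  have E2 : d (s u0) y = d x y - u0.
    rewrite -{1}sL Hsd //; last by apply/andP; split; lra.
    by rewrite absle //; case/andP: u0I.
  have T1 := dT e (s u0) x. have T2 := dT e (s u0) y.
  rewrite (dC (s u0) x) E1 in T1. rewrite E2 in T2.
  rewrite /gprod /h; lra.
move=> t tI.
have [h0 _] := Hg.
case/andP: (u0I) => u00 u0L.
have Htx : is_geodesic d (fun b => s (u0 - b)) u0.
  split => // a b aI bI; rewrite Hsd; last 2 first.
    by case/andP: aI => ? ?; apply/andP; split; lra.
    by case/andP: bI => ? ?; apply/andP; split; lra.
  have -> : u0 - a - (u0 - b) = b - a by ring.
  by rewrite distrC.
have Hty : is_geodesic d (fun b => s (u0 + b)) (d x y - u0).
  split; first lra.
  move=> a b aI bI; rewrite Hsd; last 2 first.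
    by case/andP: aI => ? ?; apply/andP; split; lra.
    by case/andP: bI => ? ?; apply/andP; split; lra.
  have -> : u0 + a - (u0 + b) = a - b by ring.
  by [].
have Sx := side Hm Hg gh Hgx (etrans gx0 (esym g0)) gxL Mx Htx
  (ltac:(by rewrite /= subr0)) (ltac:(by rewrite /= subrr)).
have Sy := side Hm Hg gh Hgy (etrans gy0 (esym g0)) gyL My Hty
  (ltac:(by rewrite /= addr0)) (ltac:(by rewrite /= addrC subrK)).
have A := Sx (ltac:(move=> b bI; rewrite g0; apply: Hcl;
   by case/andP: bI => ? ?; apply/andP; split; lra)) hx t tI.
have B := Sy (ltac:(move=> b bI; rewrite g0; apply: Hcl;
   by case/andP: bI => ? ?; apply/andP; split; lra)) hy t tI.
apply: le_trans (dT _ (g t) _) _.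
rewrite dC; lra.
Qed.

Lemma geod_distL (R : realType) (X : Type) (d : X -> X -> R) (g : R -> X) (L t : R) :
  is_geodesic d g L -> 0 <= t <= L -> d (g t) (g L) = L - t.
Proof.
move=> [L0 Hg] tI; rewrite Hg //; last by apply/andP; split; lra.
by rewrite absle //; case/andP: tI.
Qed.

Lemma gprod_ge0 (R : realType) (X : Type) (d : X -> X -> R) :
  is_metric d -> forall e a b, 0 <= gprod d e a b.
Proof.
move=> [dge0 [d0 [dC dT]]] e a b; rewrite /gprod.
have := dT a e b; rewrite (dC a e); lra.
Qed.

Lemma fourpt (R : realType) (X : Type) (d : X -> X -> R) :
  is_metric d -> geodesic_space d -> forall (N : R -> R -> R), morse_gauge N ->
  forall e x y z, XN d N e x -> XN d N e y -> XN d N e z ->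
  forall M, M <= gprod d e x y -> M <= gprod d e y z ->
  M - 4 * N 3 0 <= gprod d e x z.
Proof.
move=> Hm Hgeo N HN e x y z [gx [Lx [Hgx [gx0 [gxL Mx]]]]]
  [gy [Ly [Hgy [gy0 [gyL My]]]]] [gz [Lz [Hgz [gz0 [gzL Mz]]]]] M H1 H2.
have [dge0 [d0 [dC dT]]] := Hm.
have D0 : 0 <= N 3 0 by apply: HN; lra.
have G0 := gprod_ge0 Hm e x z.
case: (leP M 0) => M0; first lra.
have [h1 [P1 [h1x [h1y C1]]]] := close Hm Hgeo Hgx gx0 gxL Mx Hgy gy0 gyL My.
have [h2 [P2 [h2y [h2z C2]]]] := close Hm Hgeo Hgy gy0 gyL My Hgz gz0 gzL Mz.
have MI1 : 0 <= M <= h1 by apply/andP; split; lra.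
have MI2 : 0 <= M <= h2 by apply/andP; split; lra.
have A := C1 M MI1. have B := C2 M MI2.
have Ex : d (gx M) x = Lx - M.
  by rewrite -gxL (geod_distL M Hgx) //; apply/andP; split; lra.
have Ez : d (gz M) z = Lz - M.
  by rewrite -gzL (geod_distL M Hgz) //; apply/andP; split; lra.
have [Lx0 _] := Hgx. have [Lz0 _] := Hgz.
have Lxe : Lx = d e x.
  by rewrite -gx0 -gxL (geod_dist0 Lx Hgx) //; apply/andP; split; lra.
have Lze : Lz = d e z.
  by rewrite -gz0 -gzL (geod_dist0 Lz Hgz) //; apply/andP; split; lra.
have T1 := dT x (gx M) z. have T2 := dT (gx M) (gz M) z.
have T3 := dT (gx M) (gy M) (gz M).
rewrite (dC x (gx M)) Ex in T1. rewrite Ez in T2.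
rewrite /gprod -Lxe -Lze; lra.
Qed.

Lemma gprodC (R : realType) (X : Type) (d : X -> X -> R) :
  is_metric d -> forall e a b, gprod d e a b = gprod d e b a.
Proof. move=> [_ [_ [dC _]]] e a b; rewrite /gprod (dC a b); congr (_ / 2); ring. Qed.

Lemma liminf_cmp (R : realType) (X : Type) (d : X -> X -> R) :
  is_metric d -> geodesic_space d -> forall (N : R -> R -> R), morse_gauge N ->
  forall e (a b u v : nat -> X),
  (forall n, XN d N e (a n)) -> (forall n, XN d N e (b n)) ->
  (forall n, XN d N e (u n)) -> (forall n, XN d N e (v n)) ->
  seq_equiv d e a u -> seq_equiv d e b v ->
  (liminf2 (fun m n => gprod d e (a n) (b m)) <=
   liminf2 (fun m n => gprod d e (u n) (v m)) + (8 * N 3 0)%:E)%E.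
Proof.
move=> Hm Hgeo N HN e a b u v Xa Xb Xu Xv Hau Hbv.
have D0 : 0 <= N 3 0 by apply: HN; lra.
apply/ereal_supP => _ [k _ <-].
set I := ereal_inf _.
have Ige0 : (0 <= I)%E.
  apply/ereal_infP => _ [m [n [_ [_ ->]]]]; rewrite lee_fin; exact: gprod_ge0.
have IleK : forall K, (k <= K)%N -> (I <= (gprod d e (a K) (b K))%:E)%E.
  by move=> K kK; apply: ereal_inf_lbound; exists K, K.
have [r Ir] : exists r, I = r%:E.
  exists (fine I); rewrite fineK // ge0_fin_numE //.
  exact: (le_lt_trans (IleK k (leqnn k)) (ltry _)).
rewrite Ir.
have [n1 H1] := Hau r. have [n2 H2] := Hbv r.
set K := maxn k (maxn n1 n2).
have kK : (k <= K)%N by rewrite leq_maxl.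
have n1K : (n1 <= K)%N by rewrite /K (leq_trans (leq_maxl n1 n2)) // leq_maxr.
have n2K : (n2 <= K)%N by rewrite /K (leq_trans (leq_maxr n1 n2)) // leq_maxr.
have rA : r <= gprod d e (a K) (b K) by rewrite -lee_fin -Ir; exact: IleK.
have low : ((r - 8 * N 3 0)%:E <= ereal_inf
    [set z | exists m n : nat, (K <= m)%N /\ (K <= n)%N /\
       z = (gprod d e (u n) (v m))%:E])%E.
  apply/ereal_infP => _ [m [n [Km [Kn ->]]]]; rewrite lee_fin.
  have S1 := fourpt Hm Hgeo HN (Xa K) (Xb K) (Xv m) r rA
    (ltW (H2 K m n2K (leq_trans n2K Km))).
  have Hun : r - 4 * N 3 0 <= gprod d e (u n) (a K).
    rewrite gprodC //; have := H1 K n n1K (leq_trans n1K Kn); lra.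
  have S2 := fourpt Hm Hgeo HN (Xu n) (Xa K) (Xv m) _ Hun S1.
  lra.
have LB : (ereal_inf
    [set z | exists m n : nat, (K <= m)%N /\ (K <= n)%N /\
       z = (gprod d e (u n) (v m))%:E] <=
    liminf2 (fun m n => gprod d e (u n) (v m)))%E.
  by apply: ereal_sup_ubound; exists K.
apply: le_trans (leeD2r _ (le_trans low LB)).
by rewrite -EFinD lee_fin; lra.
Qed.

Unset Implicit Arguments.

Theorem lemma3p11 (R : realType) (X : Type) (d : X -> X -> R)
  (Hmet : is_metric d) (Hgeo : geodesic_space d) (e : X)
  (N N' : R -> R -> R) (HN : morse_gauge N) (HN' : morse_gauge N')
  (HNN' : gauge_le N N')
  (u v : nat -> X) (Hu : gromov_seq d N e u) (Hv : gromov_seq d N e v) :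
  (gprodN d e (bclass d N e u) (bclass d N e v)
     <= gprodN d e (bclass d N' e u) (bclass d N' e v))%E /\
  (gprodN d e (bclass d N' e u) (bclass d N' e v)
     <= gprodN d e (bclass d N e u) (bclass d N e v) + (32 * N' 3 0)%:E)%E.
Proof.
have XNmono : forall x, XN d N e x -> XN d N' e x.
  move=> x [g [L [Hg [g0 [gL M]]]]]; exists g, L; do 3 (split => //).
  move=> K C K1 C0 q a b qg oa ob t tI.
  have [s [sI Hs]] := M K C K1 C0 q a b qg oa ob t tI.
  exists s; split => //; exact: le_trans Hs (HNN' K C K1 C0).
have Bmono : forall w s, bclass d N e w s -> bclass d N' e w s.
  move=> w s [[Xs Ts] Es]; split => //; split => //; move=> n; exact: XNmono.
split.
  apply: ereal_sup_le => _ [a [b [Ha [Hb ->]]]]; exists a, b.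
  by split; [exact: Bmono | split; [exact: Bmono | done]].
apply/ereal_supP => _ [a [b [Ha [Hb ->]]]].
have [[Xa _] Eau] := Ha. have [[Xb _] Ebv] := Hb.
have L := liminf_cmp Hmet Hgeo HN' Xa Xb (fun n => XNmono _ (Hu.1 n))
  (fun n => XNmono _ (Hv.1 n)) Eau Ebv.
apply: le_trans L _.
apply: leeD.
  apply: ereal_sup_ubound; exists u, v.
  by split; [split => //; exact: Hu.2 | split; [split => //; exact: Hv.2 | done]].
rewrite lee_fin; have := HN' 3 0; lra.
Qed.
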